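(* If a graph matroid family $\mathcal{M}$ is bounded, then it has the Lovász-Yemini property.
   Context: All graphs are finite and simple and have no isolated vertices. A graph matroid family $\mathcal{M}$ assigns to every graph $G$ a matroid $\mathcal{M}(G)$ on $E(G)$ such that (i) every graph isomorphism $V(G)\to V(H)$ induces an isomorphism $\mathcal{M}(G)\to\mathcal{M}(H)$, and (ii) for every subgraph $H$ of $G$, $\mathcal{M}(H)$ is the restriction of $\mathcal{M}(G)$ to $E(H)$. $r(G)$ is the rank of $\mathcal{M}(G)$. $\mathcal{M}$ is bounded if $r(K_n)$ is bounded in $n$. $G$ is $\mathcal{M}$-rigid if $r(G)=r(K_{V(G)})$. $\mathcal{M}$ has the Lovász-Yemini property if there is a nonnegative integer $c$ such that every $c$-connected graph is $\mathcal{M}$-rigid. *)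

(* Defs.v *)
From mathcomp Require Import all_boot all_order.
From mathcomp Require Import finmap.
Set Implicit Arguments. Unset Strict Implicit. Unset Printing Implicit Defensive.
Local Open Scope fset_scope.

(* Vertices are natural numbers; an edge {u,v} is stored canonically as (u,v) with u < v.
   A graph is its (finite) edge set; since graphs have no isolated vertices, the vertex
   set is the set of endpoints.  No loops, no multi-edges: simple graphs. *)
Definition edge := (nat * nat)%type.

Definition is_graph (G : {fset edge}) : bool := all (fun e : edge => e.1 < e.2) G.

Definition verts (G : {fset edge}) : {fset nat} :=
  [fset e.1 | e in G] `|` [fset e.2 | e in G].

Definition mkedge (u v : nat) : edge := (minn u v, maxn u v).

Definition Kgraph (V : {fset nat}) : {fset edge} :=
  [fset ((u, v) : edge) | u in V, v in V & u < v].

Definition Kn (n : nat) : {fset edge} := Kgraph [fset i | i in iota 0 n].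

Definition is_matroid (E : {fset edge}) (indep : {fset edge} -> bool) : Prop :=
  [/\ indep fset0,
      (forall X Y, X `<=` Y -> Y `<=` E -> indep Y -> indep X) &
      (forall X Y, X `<=` E -> Y `<=` E -> indep X -> indep Y -> #|` X| < #|` Y| ->
         exists2 e, e \in Y `\` X & indep (e |` X))].

Definition graph_iso (phi : nat -> nat) (G H : {fset edge}) : Prop :=
  [/\ {in verts G &, injective phi},
      [fset phi x | x in verts G] = verts H &
      (forall u v, u \in verts G -> v \in verts G ->
         (mkedge u v \in G) = (mkedge (phi u) (phi v) \in H))].

Definition emap (phi : nat -> nat) (X : {fset edge}) : {fset edge} :=
  [fset mkedge (phi e.1) (phi e.2) | e in X].

(* A graph matroid family: M G is the independence predicate of the matroid M(G)
   on E(G) (only its values on subsets of E(G) are meaningful). *)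
Definition graph_matroid_family (M : {fset edge} -> {fset edge} -> bool) : Prop :=
  [/\ (forall G, is_graph G -> is_matroid G (M G)),
      (forall G H phi, is_graph G -> is_graph H -> graph_iso phi G H ->
         forall X, X `<=` G -> M G X = M H (emap phi X)) &
      (forall G H, is_graph G -> is_graph H -> H `<=` G ->
         forall X, X `<=` H -> M H X = M G X)].

Definition rank (M : {fset edge} -> {fset edge} -> bool) (G : {fset edge}) : nat :=
  \max_(X <- fpowerset G | M G X) #|` X|.

Definition bounded (M : {fset edge} -> {fset edge} -> bool) : Prop :=
  exists B, forall n, rank M (Kn n) <= B.

Definition M_rigid (M : {fset edge} -> {fset edge} -> bool) (G : {fset edge}) : Prop :=
  rank M G = rank M (Kgraph (verts G)).

Definition connected_minus (G : {fset edge}) (S : {fset nat}) : Prop :=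
  let adj := fun x y : nat =>
    [&& mkedge x y \in G, x != y, x \notin S & y \notin S] in
  forall u v, u \in verts G `\` S -> v \in verts G `\` S ->
    exists p : seq nat, path adj u p && (last u p == v).

Definition k_connected (c : nat) (G : {fset edge}) : Prop :=
  c < #|` verts G| /\
  forall S : {fset nat}, S `<=` verts G -> #|` S| < c -> connected_minus G S.

Definition lovasz_yemini (M : {fset edge} -> {fset edge} -> bool) : Prop :=
  exists c : nat, forall G, is_graph G -> k_connected c G -> M_rigid M G.

(* Main.v *)
Require Import Defs.
From mathcomp Require Import all_boot all_order.
From mathcomp Require Import finmap.
From mathcomp Require Import zify.
From Stdlib Require Import Classical.
Set Implicit Arguments. Unset Strict Implicit. Unset Printing Implicit Defensive.
Local Open Scope fset_scope.

Lemma mkedge_eq a b c d : mkedge a b = mkedge c d -> (a = c /\ b = d) \/ (a = d /\ b = c).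
Proof. move=> [] . lia. Qed.

Lemma mkedgeC a b : mkedge a b = mkedge b a.
Proof. rewrite /mkedge; congr pair; lia. Qed.

Lemma mkedge_id (e : edge) : e.1 < e.2 -> mkedge e.1 e.2 = e.
Proof. case: e => a b /= h; rewrite /mkedge; congr pair; lia. Qed.

Lemma graphP G e : is_graph G -> e \in G -> e.1 < e.2.
Proof. by move=> /allP h /h. Qed.

Lemma graph_sub G H : is_graph G -> H `<=` G -> is_graph H.
Proof. move=> /allP h /fsubsetP s; apply/allP => e /s; exact: h. Qed.

Lemma in_verts1 G e : e \in G -> e.1 \in verts G.
Proof. by move=> h; rewrite in_fsetU; apply/orP; left; apply/imfsetP; exists e. Qed.
Lemma in_verts2 G e : e \in G -> e.2 \in verts G.
Proof. by move=> h; rewrite in_fsetU; apply/orP; right; apply/imfsetP; exists e. Qed.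

Lemma vertsP G x : reflect (exists2 e, e \in G & (x = e.1 \/ x = e.2)) (x \in verts G).
Proof.
apply: (iffP idP).
  rewrite in_fsetU => /orP [] /imfsetP [e /= he ->]; exists e; auto.
by move=> [e he [] ->]; [exact: in_verts1 | exact: in_verts2].
Qed.

Lemma in_Kgraph V e : (e \in Kgraph V) = [&& e.1 \in V, e.2 \in V & e.1 < e.2].
Proof.
apply/imfset2P/idP.
  move=> [u /= hu [v /= /andP [hv huv] ->]]. by rewrite /= hu hv huv.
case: e => a b /= /and3P [ha hb hab]; exists a => //=; exists b => //=; apply/andP; split => //.
Qed.

Lemma Kgraph_graph V : is_graph (Kgraph V).
Proof. by apply/allP => e; rewrite in_Kgraph => /and3P []. Qed.

Lemma sub_Kgraph G : is_graph G -> G `<=` Kgraph (verts G).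
Proof.
move=> hG; apply/fsubsetP => e he; rewrite in_Kgraph in_verts1 // in_verts2 //=.
exact: graphP he.
Qed.

Lemma Kgraph_mono V W : V `<=` W -> Kgraph V `<=` Kgraph W.
Proof.
move=> /fsubsetP s; apply/fsubsetP => e; rewrite !in_Kgraph => /and3P [h1 h2 ->].
by rewrite !s.
Qed.

Lemma card_verts G : #|` verts G| <= 2 * #|` G|.
Proof.
rewrite /verts mul2n -addnn; apply: leq_trans (leq_card_fsetU _ _) _.
by apply: leq_add; apply: leq_imfset_card.
Qed.

Lemma bigmax_att (I : eqType) (r : seq I) (P : pred I) (F : I -> nat) :
  \max_(i <- r | P i) F i = 0 \/ exists2 i, (i \in r) && P i & F i = \max_(i <- r | P i) F i.
Proof.
elim: r => [|x r IH]; first by left; rewrite big_nil.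
rewrite big_cons; case: ifP => Px; last first.
  case: IH => [e|[i /andP [ir Pi] e]]; [by left | right; exists i => //].
  by rewrite inE ir orbT.
case: (leqP (\max_(i <- r | P i) F i) (F x)) => h.
  by right; exists x; rewrite // inE eqxx Px.
case: IH => [e|[i /andP [ir Pi] e]]; first by rewrite e in h.
by right; exists i; rewrite // inE ir orbT.
Qed.

Section R.
Variable M : {fset edge} -> {fset edge} -> bool.
Hypothesis hM : graph_matroid_family M.

Lemma restr G H X : is_graph G -> H `<=` G -> X `<=` H -> M H X = M G X.
Proof.
case: hM => _ _ h3 gG HG XH; apply: h3 => //; exact: graph_sub HG.
Qed.

Lemma indep0 G : is_graph G -> M G fset0.
Proof. by case: hM => h1 _ _ /h1 []. Qed.

Lemma rank_ge G X : X `<=` G -> M G X -> #|` X| <= rank M G.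
Proof.
move=> XG MX; rewrite /rank; apply: (leq_bigmax_seq X) => //.
by rewrite fpowersetE.
Qed.

Lemma rank_att G : is_graph G -> exists2 X, X `<=` G & M G X /\ #|` X| = rank M G.
Proof.
move=> gG; case: (bigmax_att (fpowerset G) (M G) (fun X => #|` X|)) => [e|[X /andP [XG MX] e]].
  by exists fset0; [exact: fsub0set | rewrite /rank e cardfs0; split => //; exact: indep0].
by exists X; [rewrite -fpowersetE | split].
Qed.

Lemma rank_mono G H : is_graph G -> H `<=` G -> rank M H <= rank M G.
Proof.
move=> gG HG; have gH := graph_sub gG HG.
have [X XH [MX <-]] := rank_att gH.
apply: rank_ge; first exact: fsubset_trans XH HG.
by rewrite -(restr gG HG XH).
Qed.

End R.

Section Iso.
Variable phi : nat -> nat.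
Variable G : {fset edge}.
Hypothesis gG : is_graph G.
Hypothesis inj : {in verts G &, injective phi}.

Definition fe (e : edge) : edge := mkedge (phi e.1) (phi e.2).

Lemma emapE X : emap phi X = [fset fe e | e in X].
Proof. by []. Qed.

Lemma fe_inj : {in G &, injective fe}.
Proof.
move=> e e' he he' /mkedge_eq.
have l := graphP gG he; have l' := graphP gG he'.
have v1 := in_verts1 he; have v2 := in_verts2 he.
have v1' := in_verts1 he'; have v2' := in_verts2 he'.
case: e e' he he' l l' v1 v2 v1' v2' => a b [c d] /= _ _ l l' v1 v2 v1' v2'.
case=> [[/inj h1 /inj h2]|[/inj h1 /inj h2]].
  by rewrite h1 // h2.
have := h1 v1 v2'; have := h2 v2 v1'; lia.
Qed.

Lemma emap_graph : is_graph (emap phi G).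
Proof.
apply/allP => e' /imfsetP [e /= he ->]; rewrite /fe /mkedge /=.
have l := graphP gG he.
have /eqP : phi e.1 != phi e.2.
  apply/negP => /eqP /inj h; have := h (in_verts1 he) (in_verts2 he); lia.
move: (phi e.1) (phi e.2) => a b; lia.
Qed.

Lemma emap_iso : graph_iso phi G (emap phi G).
Proof.
split => //.
- apply/fsetP => y; apply/imfsetP/vertsP.
    move=> [x /= /vertsP [e he hx] ->].
    exists (fe e); first by apply/imfsetP; exists e.
    rewrite /fe /mkedge /=; case: hx => ->; move: (phi e.1) (phi e.2) => a b; lia.
  move=> [e' /imfsetP [e /= he ->] hy]; rewrite /fe /mkedge /= in hy.
  have key : forall a b z : nat, (z = minn a b \/ z = maxn a b) -> z = a \/ z = b by move=> *; lia.
  have [hh|hh] := key _ _ _ hy.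
    by exists e.1 => //; apply: in_verts1.
  by exists e.2 => //; apply: in_verts2.
- move=> u v hu hv; apply/idP/idP.
    move=> h; apply/imfsetP; exists (mkedge u v) => //.
    rewrite /fe /=; case: (leqP u v) => h' //=; by rewrite mkedgeC.
  move=> /imfsetP [e /= he /mkedge_eq hh].
  have l := graphP gG he.
  have v1 := in_verts1 he; have v2 := in_verts2 he.
  case: hh => [[/inj h1 /inj h2]|[/inj h1 /inj h2]].
    by rewrite h1 // h2 // mkedge_id.
  by rewrite h1 // h2 // mkedgeC mkedge_id.
Qed.

Lemma emap_sub X : X `<=` G -> emap phi X `<=` emap phi G.
Proof.
move=> /fsubsetP s; apply/fsubsetP => e' /imfsetP [e /= he ->].
by apply/imfsetP; exists e => //; apply: s.
Qed.

Lemma card_emap X : X `<=` G -> #|` emap phi X| = #|` X|.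
Proof.
move=> /fsubsetP s; apply/eqP/card_in_imfsetP => e e' he he'.
by apply: fe_inj; apply: s.
Qed.

Variable M : {fset edge} -> {fset edge} -> bool.
Hypothesis hM : graph_matroid_family M.

Lemma iso_indep X : X `<=` G -> M G X = M (emap phi G) (emap phi X).
Proof.
case: hM => _ h2 _ XG; apply: h2 => //; [exact: emap_graph | exact: emap_iso].
Qed.

Lemma rank_emap : rank M (emap phi G) = rank M G.
Proof.
apply/eqP; rewrite eqn_leq; apply/andP; split; last first.
  have [X XG [MX <-]] := rank_att hM gG.
  rewrite -(card_emap XG); apply: rank_ge; first exact: emap_sub.
  by rewrite -iso_indep.
have [Y YH [MY <-]] := rank_att hM emap_graph.
pose X := [fset e in G | fe e \in Y].
have XG : X `<=` G by apply/fsubsetP => e; rewrite inE => /andP [].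
have EY : emap phi X = Y.
  apply/fsetP => y; apply/imfsetP/idP.
    by move=> [e /=]; rewrite inE => /andP [_ h] ->.
  move=> hy; have := fsubsetP YH y hy => /imfsetP [e /= he ey].
  by exists e => //=; rewrite /X !inE he /= /fe -ey hy.
rewrite -EY card_emap //; apply: rank_ge => //.
by rewrite iso_indep // EY.
Qed.

End Iso.

Local Close Scope fset_scope.
Definition Mt (m : nat) : {fset edge} := [fset (((2 * i)%N, (2 * i + 1)%N) : edge) | i in iota 0 m]%fset.

Lemma in_Mt m e : reflect (exists2 i, i < m & e = (2 * i, 2 * i + 1)) (e \in Mt m).
Proof.
rewrite /Mt; apply: (iffP idP).
  by move=> /imfsetP [i /=]; rewrite mem_iota add0n => hi ->; exists i.
by move=> [i hi ->]; apply/imfsetP; exists i => //=; rewrite mem_iota add0n.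
Qed.

Lemma Mt_graph m : is_graph (Mt m).
Proof. apply/allP => e /in_Mt [i _ ->] /=; lia. Qed.

Lemma Mt_verts m x : x \in verts (Mt m) -> x < 2 * m.
Proof. move=> /vertsP [e /in_Mt [i hi ->] /= [] ->]; lia. Qed.

Definition ext (phi : nat -> nat) n a b i := if i == n then a else if i == n.+1 then b else phi i.

Lemma ext_inj phi n a b :
  {in [pred i | i < n] &, injective phi} ->
  (forall i, i < n -> phi i <> a /\ phi i <> b) -> a <> b ->
  {in [pred i | i < n.+2] &, injective (ext phi n a b)}.
Proof.
move=> inj hab ab.
have E : forall k, k < n.+2 -> (k < n /\ ext phi n a b k = phi k) \/
    (k = n /\ ext phi n a b k = a) \/ (k = n.+1 /\ ext phi n a b k = b).
  move=> k hk; rewrite /ext; case: eqP => [->|kn]; first by right; left.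
  case: eqP => [->|kn1]; first by right; right.
  left; split => //; lia.
move=> i j; rewrite !inE => hi hj.
have [[i1 ->]|[[i1 ->]|[i1 ->]]] := E i hi;
have [[j1 ->]|[[j1 ->]|[j1 ->]]] := E j hj => h.
- by apply: inj; rewrite ?inE.
- by case: (hab i i1) => /(_ h).
- by case: (hab i i1) => _ /(_ h).
- by case: (hab j j1) => /(_ (esym h)).
- by rewrite i1 j1.
- by case: (ab h).
- by case: (hab j j1) => _ /(_ (esym h)).
- by case: (ab (esym h)).
- by rewrite i1 j1.
Qed.

Lemma ext_emap phi m a b :
  emap (ext phi (2 * m) a b) (Mt m.+1) = (mkedge a b |` emap phi (Mt m))%fset.
Proof.
apply/fsetP => y; rewrite in_fset1U; apply/imfsetP/idP.
  move=> [e /= /in_Mt [i hi ->] ->] /=; rewrite /ext.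
  case: (eqVneq i m) => [->|nim].
    rewrite eqxx; have -> : (2 * m + 1 == 2 * m) = false by apply/eqP; lia.
    have -> : (2 * m + 1 == (2 * m).+1) by apply/eqP; lia.
    by rewrite eqxx.
  have -> : (2 * i == 2 * m) = false by apply/eqP; lia.
  have -> : (2 * i == (2 * m).+1) = false by apply/eqP; lia.
  have -> : (2 * i + 1 == 2 * m) = false by apply/eqP; lia.
  have -> : (2 * i + 1 == (2 * m).+1) = false by apply/eqP; lia.
  apply/orP; right; apply/imfsetP; exists (2 * i, 2 * i + 1) => //=.
  apply/in_Mt; exists i => //; lia.
case/orP => [/eqP ->|/imfsetP [e /= /in_Mt [i hi ->] ->]].
  exists (2 * m, 2 * m + 1); first by apply/in_Mt; exists m.
  rewrite /= /ext eqxx; have -> : (2 * m + 1 == 2 * m) = false by apply/eqP; lia.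
  have -> : (2 * m + 1 == (2 * m).+1) by apply/eqP; lia.
  by [].
exists (2 * i, 2 * i + 1); first by apply/in_Mt; exists i => //; lia.
rewrite /= /ext.
have -> : (2 * i == 2 * m) = false by apply/eqP; lia.
have -> : (2 * i == (2 * m).+1) = false by apply/eqP; lia.
have -> : (2 * i + 1 == 2 * m) = false by apply/eqP; lia.
have -> : (2 * i + 1 == (2 * m).+1) = false by apply/eqP; lia.
by [].
Qed.

Lemma card_imseq (f : nat -> nat) (s : seq nat) : #|` [fset f i | i in s]%fset| <= size s.
Proof. apply: leq_trans (leq_imfset_card _ _ _) _; rewrite /enum_finmem /=; exact: size_undup. Qed.

Lemma lt_from (i n : nat) : i < n.+2 -> i <> n -> i <> n.+1 -> i < n.
Proof. lia. Qed.

Lemma two_elems (A : {fset nat}) : 1 < #|` A| -> exists v w, [/\ v \in A, w \in A & v <> w].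
Proof.
move=> h; have : A != fset0%fset by rewrite -cardfs_gt0; lia.
move=> /fset0Pn [v hv].
have : (A `\ v)%fset != fset0%fset.
  rewrite -cardfs_gt0; move: h; rewrite (cardfsD1 v A) hv; lia.
move=> /fset0Pn [w]; rewrite in_fsetD1 => /andP [wv hw].
by exists v, w; split => //; move=> e; rewrite e eqxx in wv.
Qed.

Lemma greedy c G (S0 : {fset nat}) m : is_graph G -> k_connected c G -> (S0 `<=` verts G)%fset ->
  #|` S0| + 2 * m <= c ->
  exists phi, [/\ {in [pred i | i < 2 * m] &, injective phi},
     (forall i, i < 2 * m -> phi i \in verts G /\ phi i \notin S0) &
     (emap phi (Mt m) `<=` G)%fset].
Proof.
move=> gG [cV cc] S0V; elim: m => [|m IH] hm.
  exists id; split => //.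
  apply/fsubsetP => y /imfsetP [e /= /in_Mt [i hi _] _]; by [].
have [phi [inj hv hsub]] : exists phi, _ := IH ltac:(lia).
pose S := (S0 `|` [fset phi i | i in iota 0 (2 * m)])%fset.
have SV : (S `<=` verts G)%fset.
  apply/fsubsetP => x; rewrite in_fsetU => /orP [/(fsubsetP S0V) //|/imfsetP [i /=]].
  by rewrite mem_iota add0n => /hv [] + _ ->.
have cS : #|` S| < c.
  apply: leq_ltn_trans (leq_card_fsetU _ _) _.
  have h : #|` [fset phi i | i in iota 0 (2 * m)]%fset| <= 2 * m.
    by rewrite -[X in _ <= X](size_iota 0); apply: card_imseq.
  lia.
have [v [w [hv' hw' vw]]] : exists v w, [/\ v \in (verts G `\` S)%fset, w \in (verts G `\` S)%fset & v <> w].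
  apply: two_elems; rewrite cardfsDS //; lia.
have [p /andP [pp lp]] := cc S SV cS v w hv' hw'.
case: p pp lp => [_ /eqP //|x p] /= /andP [/and4P [ex vx vS xS] _] _.
have xV : x \in verts G.
  apply/vertsP; exists (mkedge v x) => //=; rewrite /mkedge /=; lia.
have vV : v \in verts G by move: hv'; rewrite in_fsetD => /andP [].
have phiS : forall i, i < 2 * m -> phi i \in S.
  move=> i hi; rewrite in_fsetU; apply/orP; right; apply/imfsetP; exists i => //=.
  by rewrite mem_iota add0n.
have S0S : forall y, y \in S0 -> y \in S by move=> y hy; rewrite in_fsetU hy.
exists (ext phi (2 * m) v x); split.
- have := @ext_inj phi (2 * m) v x inj.
  have -> : (2 * m).+2 = 2 * m.+1 by rewrite mulnS add2n.
  apply.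
    move=> i hi; split => e; have := phiS i hi; rewrite e; [exact/negP | exact/negP].
  by move/eqP: vx.
- move=> i hi; rewrite /ext; case: eqP => n1.
    by split => //; apply/negP => /S0S; exact/negP.
  case: eqP => n2.
    by split => //; apply/negP => /S0S; exact/negP.
  apply: hv; apply: lt_from n1 n2; by rewrite -(add2n (2 * m)) -mulnS.
- rewrite ext_emap; apply/fsubsetP => y; rewrite in_fset1U => /orP [/eqP -> //|].
  exact: (fsubsetP hsub).
Qed.

Lemma rank_le_B M B : graph_matroid_family M -> (forall n, rank M (Kn n) <= B) ->
  forall G, is_graph G -> rank M G <= B.
Proof.
move=> hM hB G gG.
pose N := (\max_(x <- verts G) x).+1.
apply: leq_trans (hB N); apply: rank_mono => //; first exact: Kgraph_graph.
apply: fsubset_trans (sub_Kgraph gG) _; apply: Kgraph_mono.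
apply/fsubsetP => x hx; apply/imfsetP; exists x => //.
rewrite mem_iota add0n /N ltnS; exact: (leq_bigmax_seq x).
Qed.

Lemma max_exists (h : nat -> nat) B : (forall m, h m <= B) -> exists m0, forall m, h m <= h m0.
Proof.
move=> hB.
suff : forall d m, B - h m <= d -> exists m0, forall m, h m <= h m0 by move/(_ B 0); apply; lia.
elim => [|d IH] m hm.
  by exists m => m'; have := hB m'; lia.
case: (classic (exists m', h m < h m')) => [[m' hm']|nex].
  by apply: (IH m'); have := hB m'; lia.
exists m => m'; rewrite leqNgt; apply/negP => hh; apply: nex; by exists m'.
Qed.

Theorem lemma3p12 (M : {fset edge} -> {fset edge} -> bool) :
  graph_matroid_family M -> bounded M -> lovasz_yemini M.
Proof.
move=> hM [B hB].
have rB := rank_le_B hM hB.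
have [m0 hm0] := @max_exists (fun m => rank M (Mt m)) B (fun m => rB _ (Mt_graph m)).
exists (2 * B + 2 * m0 + 1) => G gG Gc.
rewrite /M_rigid; set K := Kgraph (verts G).
have gK : is_graph K := Kgraph_graph _.
have GK : (G `<=` K)%fset := sub_Kgraph gG.
apply/eqP; rewrite eqn_leq (rank_mono hM gK GK) /=.
have injMt : forall (phi : nat -> nat) (m : nat), {in [pred i | i < 2 * m] &, injective phi} ->
    {in verts (Mt m) &, injective phi}.
  move=> phi m inj x y hx hy; apply: inj; rewrite inE; exact: Mt_verts.
have lower : rank M (Mt m0) <= rank M G.
  have [phi [inj _ sub]] := @greedy _ G fset0%fset m0 gG Gc (fsub0set _) ltac:(rewrite cardfs0 add0n; lia).
  rewrite -(rank_emap (Mt_graph m0) (injMt _ _ inj) hM).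
  exact: rank_mono.
apply: leq_trans lower; rewrite leqNgt; apply/negP => hlt.
have [J JK [MJ cJ]] := rank_att hM gK.
have JB : #|` J| <= B by rewrite cJ; apply: rB.
pose S0 := verts J.
have S0V : (S0 `<=` verts G)%fset.
  apply/fsubsetP => x /vertsP [e /(fsubsetP JK)]; rewrite in_Kgraph => /and3P [h1 h2 _] [] ->//.
have cS0 : #|` S0| <= 2 * B by apply: leq_trans (card_verts J) _; lia.
have [phi [inj hv sub]] := @greedy _ G S0 m0 gG Gc S0V ltac:(lia).
pose F := emap phi (Mt m0).
have gF : is_graph F := emap_graph (Mt_graph m0) (injMt _ _ inj).
have FK : (F `<=` K)%fset := fsubset_trans sub GK.
have rF : rank M F = rank M (Mt m0) := rank_emap (Mt_graph m0) (injMt _ _ inj) hM.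
have [I IF [MI cI]] := rank_att hM gF.
have MIK : M K I by rewrite -(restr hM gK FK IF).
have [e eJI MeI] : exists2 e, e \in (J `\` I)%fset & M K (e |` I)%fset.
  case: hM => h1 _ _; case: (h1 K gK) => _ _ aug.
  apply: aug => //; [exact: fsubset_trans IF FK | by rewrite cI rF cJ].
move: eJI; rewrite in_fsetD => /andP [eI eJ].
have eK : e \in K := fsubsetP JK e eJ.
have le : e.1 < e.2 := graphP gK eK.
have e1S : e.1 \in S0 := in_verts1 eJ.
have e2S : e.2 \in S0 := in_verts2 eJ.
pose phi' := ext phi (2 * m0) e.1 e.2.
have inj' : {in [pred i | i < 2 * m0.+1] &, injective phi'}.
  have -> : 2 * m0.+1 = (2 * m0).+2 by rewrite mulnS add2n.
  apply: ext_inj => //; last by move=> h; rewrite h ltnn in le.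
  move=> i hi; have [_ hn] := hv i hi; split => hh; move: hn; rewrite hh; by [rewrite e1S | rewrite e2S].
pose F' := emap phi' (Mt m0.+1).
have EF' : F' = (e |` F)%fset by rewrite /F' /phi' ext_emap mkedge_id.
have F'K : (F' `<=` K)%fset.
  by rewrite EF'; apply/fsubsetP => y; rewrite in_fset1U => /orP [/eqP ->//|/(fsubsetP FK)].
have eIF' : ((e |` I) `<=` F')%fset.
  rewrite EF'; apply/fsubsetP => y; rewrite !in_fset1U => /orP [->//|/(fsubsetP IF) ->].
  by rewrite orbT.
have MF' : M F' (e |` I)%fset by rewrite (restr hM gK F'K eIF').
have := rank_ge eIF' MF'.
rewrite (rank_emap (Mt_graph m0.+1) (injMt _ _ inj')  hM) cardfsU1 eI /=.
move=> h; move: (leq_trans h (hm0 m0.+1)); by rewrite cI rF add1n ltnn.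
Qed.
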